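(* There is an absolute constant $C>0$ such that the following holds. Let $0<\delta\le\frac14$, $0<a<\pi$, $\lambda\ge1$ and $M\ge1$. Let $g$ be a continuous function on the closed unit disk, analytic on its interior, satisfying $|g(\delta)|\ge1$ and, for every $0<\gamma\le1$, $|z|\le1-\gamma\Rightarrow|g(z)|\le\frac{\lambda M}{\gamma}$. Let $\Gamma$ be the circle with center $\delta$ and radius $1-\delta$, and let $J$ be the closed arc of $\Gamma$ with midpoint $1$ and arc length $a$. Then $$\max_{z\in J}|g(z)|\ge\left(\frac{\delta}{\lambda M}\right)^{C/a}.$$
   Context: The paper writes the bound as $(\delta/(\lambda M))^{O(1/a)}$, where $O(\cdot)$ hides an absolute constant. *)

(* Defs.v *)
From Stdlib Require Export Reals.
From Coquelicot Require Export Coquelicot.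
Open Scope R_scope.

Definition closed_disk (z : C) : Prop := Cmod z <= 1.

Definition continuous_on_closed_disk (g : C -> C) : Prop :=
  forall z : C, closed_disk z ->
    filterlim g (within closed_disk (locally z)) (locally (g z)).

Definition analytic_on_open_disk (g : C -> C) : Prop :=
  forall z : C, Cmod z < 1 ->
    ex_derive (K := C_AbsRing) (V := C_NormedModule) g z.

Definition Gamma_pt (delta theta : R) : C :=
  (delta + (1 - delta) * cos theta, (1 - delta) * sin theta).

(* J: closed arc of Gamma with midpoint 1 and arc length a.  Arc length a on a
   circle of radius 1 - delta corresponds to the angular interval
   |theta| <= a / (2 (1 - delta)). *)
Definition in_arc_J (delta a : R) (z : C) : Prop :=
  exists theta : R, Rabs theta <= a / (2 * (1 - delta)) /\ z = Gamma_pt delta theta.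

(* Main.v *)
Require Import Defs.
From Stdlib Require Import Reals.
From Coquelicot Require Import Coquelicot.
Open Scope R_scope.
From Stdlib Require Import Lra Psatz Lia Factorial ZArith.
From Stdlib Require Import IndefiniteDescription Classical.

Definition q4 := (R * R * R * R)%type.
Definition qa (q : q4) := fst (fst (fst q)).
Definition qb (q : q4) := snd (fst (fst q)).
Definition qc (q : q4) := snd (fst q).
Definition qd (q : q4) := snd q.

Definition Iq (I : R -> R -> R -> R -> C) (q : q4) := I (qa q) (qb q) (qc q) (qd q).

Definition qpick (I : R -> R -> R -> R -> C) (q : q4) : q4 :=
  let a := qa q in let b := qb q in let c := qc q in let d := qd q in
  let m := (a + b) / 2 in let n := (c + d) / 2 in
  let v := Cmod (I a b c d) / 4 in
  if Rle_dec v (Cmod (I a m c n)) then (a, m, c, n)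
  else if Rle_dec v (Cmod (I m b c n)) then (m, b, c, n)
  else if Rle_dec v (Cmod (I a m n d)) then (a, m, n, d)
  else (m, b, n, d).

Fixpoint qseq (I : R -> R -> R -> R -> C) (q0 : q4) (k : nat) : q4 :=
  match k with O => q0 | S k => qpick I (qseq I q0 k) end.

Lemma qpick_spec (I : R -> R -> R -> R -> C) a b c d :
  let m := (a+b)/2 in let n := (c+d)/2 in
  I a b c d = Cplus (Cplus (Cplus (I a m c n) (I m b c n)) (I a m n d)) (I m b n d) ->
  let q' := qpick I (a,b,c,d) in
  ((qa q' = a /\ qb q' = m) \/ (qa q' = m /\ qb q' = b)) /\
  ((qc q' = c /\ qd q' = n) \/ (qc q' = n /\ qd q' = d)) /\
  Cmod (I a b c d) / 4 <= Cmod (Iq I q').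
Proof.
  intros m n Hadd q'. unfold q', qpick, Iq. unfold qa, qb, qc, qd; simpl. fold m n.
  set (x1 := I a m c n) in *. set (x2 := I m b c n) in *. set (x3 := I a m n d) in *.
  set (x4 := I m b n d) in *. set (x0 := I a b c d) in *.
  destruct (Rle_dec _ _) as [h1|h1].
  { simpl. fold x1. split; [left|split;[left|]]; auto. }
  destruct (Rle_dec _ _) as [h2|h2].
  { simpl. fold x2. split; [right|split;[left|]]; auto. }
  destruct (Rle_dec _ _) as [h3|h3].
  { simpl. fold x3. split; [left|split;[right|]]; auto. }
  simpl. fold x4. split; [right|split;[right|]]; auto.
  assert (H := Cmod_triangle (x1 + x2 + x3) x4).
  assert (H' := Cmod_triangle (x1 + x2) x3).
  assert (H'' := Cmod_triangle x1 x2).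
  rewrite <- Hadd in H. lra.
Qed.

Lemma goursat_abstract (I : R -> R -> R -> R -> C) a0 b0 c0 d0 :
  a0 < b0 -> c0 < d0 ->
  (forall a b c d, a0 <= a -> a < b -> b <= b0 -> c0 <= c -> c < d -> d <= d0 ->
     I a b c d = Cplus (Cplus (Cplus (I a ((a+b)/2) c ((c+d)/2)) (I ((a+b)/2) b c ((c+d)/2)))
                  (I a ((a+b)/2) ((c+d)/2) d)) (I ((a+b)/2) b ((c+d)/2) d)) ->
  (forall x y, a0 <= x <= b0 -> c0 <= y <= d0 -> forall eta, 0 < eta ->
     exists rho, 0 < rho /\ forall a b c d, a0 <= a <= x -> x <= b <= b0 ->
       c0 <= c <= y -> y <= d <= d0 -> b - a < rho -> d - c < rho ->
       Cmod (I a b c d) <= eta * ((b - a) + (d - c))^2) ->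
  I a0 b0 c0 d0 = 0%C.
Proof.
  intros Hab Hcd Hadd Hloc.
  set (Q := qseq I (a0,b0,c0,d0)).
  set (mu := Cmod (I a0 b0 c0 d0)).
  assert (Inv : forall k, a0 <= qa (Q k) /\ qb (Q k) <= b0 /\ qb (Q k) - qa (Q k) = (b0 - a0) / 2^k /\
     c0 <= qc (Q k) /\ qd (Q k) <= d0 /\ qd (Q k) - qc (Q k) = (d0 - c0) / 2^k /\
     mu / 4^k <= Cmod (Iq I (Q k)) /\
     qa (Q k) <= qa (Q (S k)) /\ qb (Q (S k)) <= qb (Q k) /\
     qc (Q k) <= qc (Q (S k)) /\ qd (Q (S k)) <= qd (Q k)).
  { assert (Inv0 : forall k, a0 <= qa (Q k) /\ qb (Q k) <= b0 /\ qb (Q k) - qa (Q k) = (b0 - a0) / 2^k /\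
     c0 <= qc (Q k) /\ qd (Q k) <= d0 /\ qd (Q k) - qc (Q k) = (d0 - c0) / 2^k /\
     mu / 4^k <= Cmod (Iq I (Q k))).
    { induction k as [|k IH].
      - simpl. unfold qa,qb,qc,qd, Iq; simpl. unfold mu. rewrite !Rdiv_1_r. repeat split; try lra. apply Rle_refl.
      - destruct IH as (h1&h2&h3&h4&h5&h6&h7).
        assert (p2 : 0 < 2^k) by (apply pow_lt; lra).
        assert (p4 : 0 < 4^k) by (apply pow_lt; lra).
        assert (l1 : 0 < (b0-a0)/2^k) by (apply Rdiv_lt_0_compat; lra).
        assert (l2 : 0 < (d0-c0)/2^k) by (apply Rdiv_lt_0_compat; lra).
        change (Q (S k)) with (qpick I (Q k)).
        destruct (Q k) as [[[a b] c] d] eqn:EQ. unfold qa,qb,qc,qd,Iq in *; simpl in *.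
        destruct (qpick_spec I a b c d) as (s1 & s2 & s3).
        { apply Hadd; lra. }
        unfold qa,qb,qc,qd,Iq in *; simpl in *.
        destruct (qpick I (a,b,c,d)) as [[[a' b'] c'] d']; simpl in *.
        assert (E2 : 2^S k = 2 * 2^k) by reflexivity.
        assert (E4 : 4^S k = 4 * 4^k) by reflexivity.
        try rewrite E2; try rewrite E4.
        assert (mu / (4 * 4^k) = (mu / 4^k) / 4) as -> by (field; lra).
        assert ((b0 - a0) / (2 * 2^k) = ((b0 - a0) / 2^k) / 2) as -> by (field; lra).
        assert ((d0 - c0) / (2 * 2^k) = ((d0 - c0) / 2^k) / 2) as -> by (field; lra).
        destruct s1 as [[-> ->]|[-> ->]]; destruct s2 as [[-> ->]|[-> ->]]; unfold qa,qb,qc,qd in s3; simpl in s3; repeat split; lra. }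
    intro k. destruct (Inv0 k) as (h1&h2&h3&h4&h5&h6&h7).
    repeat split; auto.
    all: assert (p2 : 0 < 2^k) by (apply pow_lt; lra).
    all: assert (l1 : 0 < (b0-a0)/2^k) by (apply Rdiv_lt_0_compat; lra).
    all: assert (l2 : 0 < (d0-c0)/2^k) by (apply Rdiv_lt_0_compat; lra).
    all: change (Q (S k)) with (qpick I (Q k)).
    all: destruct (Q k) as [[[a b] c] d] eqn:EQ; unfold qa,qb,qc,qd,Iq in *; simpl in *.
    all: destruct (qpick_spec I a b c d) as (s1 & s2 & s3); [apply Hadd; lra|].
    all: unfold qa,qb,qc,qd,Iq in *; simpl in *.
    all: destruct (qpick I (a,b,c,d)) as [[[a' b'] c'] d']; simpl in *.
    all: destruct s1 as [[-> ->]|[-> ->]]; destruct s2 as [[-> ->]|[-> ->]]; lra. }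
  assert (Mono : forall j k, (j <= k)%nat ->
     qa (Q j) <= qa (Q k) /\ qb (Q k) <= qb (Q j) /\ qc (Q j) <= qc (Q k) /\ qd (Q k) <= qd (Q j)).
  { intros j k Hjk. induction Hjk.
    - lra.
    - destruct (Inv m) as (_&_&_&_&_&_&_&i1&i2&i3&i4). lra. }
  assert (Ord : forall j k, qa (Q j) <= qb (Q k) /\ qc (Q j) <= qd (Q k)).
  { intros j k. destruct (Inv j) as (_&_&hj&_&_&hj'&_).
    destruct (Inv k) as (_&_&hk&_&_&hk'&_).
    assert (0 < 2^j) by (apply pow_lt; lra). assert (0 < 2^k) by (apply pow_lt; lra).
    assert (0 < (b0-a0)/2^j) by (apply Rdiv_lt_0_compat; lra).
    assert (0 < (d0-c0)/2^j) by (apply Rdiv_lt_0_compat; lra).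
    assert (0 < (b0-a0)/2^k) by (apply Rdiv_lt_0_compat; lra).
    assert (0 < (d0-c0)/2^k) by (apply Rdiv_lt_0_compat; lra).
    destruct (Nat.le_ge_cases j k) as [h|h].
    - destruct (Mono j k h). lra.
    - destruct (Mono k j h). lra. }
  destruct (completeness (fun z => exists k, z = qa (Q k))) as [x [Hx1 Hx2]].
  { exists b0. intros z [k ->]. destruct (Inv k) as (i1&i2&i3&_). 
    assert (0 < 2^k) by (apply pow_lt; lra).
    assert (0 < (b0-a0)/2^k) by (apply Rdiv_lt_0_compat; lra). lra. }
  { exists (qa (Q 0%nat)). exists 0%nat. reflexivity. }
  destruct (completeness (fun z => exists k, z = qc (Q k))) as [y [Hy1 Hy2]].
  { exists d0. intros z [k ->]. destruct (Inv k) as (_&_&_&i1&i2&i3&_). 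
    assert (0 < 2^k) by (apply pow_lt; lra).
    assert (0 < (d0-c0)/2^k) by (apply Rdiv_lt_0_compat; lra). lra. }
  { exists (qc (Q 0%nat)). exists 0%nat. reflexivity. }
  assert (Hxk : forall k, qa (Q k) <= x <= qb (Q k)).
  { intro k. split. apply Hx1. exists k; auto.
    apply Hx2. intros z [j ->]. apply Ord. }
  assert (Hyk : forall k, qc (Q k) <= y <= qd (Q k)).
  { intro k. split. apply Hy1. exists k; auto.
    apply Hy2. intros z [j ->]. apply Ord. }
  destruct (Req_dec mu 0) as [Hmu|Hmu].
  { apply Cmod_eq_0. exact Hmu. }
  exfalso.
  assert (mupos : 0 < mu) by (pose proof (Cmod_ge_0 (I a0 b0 c0 d0)); fold mu in H; lra).
  set (L := (b0 - a0) + (d0 - c0)).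
  assert (Lpos : 0 < L) by (unfold L; lra).
  destruct (Hloc x y) with (eta := mu / (2 * L^2)) as [rho [rhopos Hrho]].
  { destruct (Hxk 0%nat), (Inv 0%nat) as (i1&i2&_). lra. }
  { destruct (Hyk 0%nat), (Inv 0%nat) as (_&_&_&i1&i2&_). lra. }
  { apply Rdiv_lt_0_compat; [lra|]. assert (0 < L^2) by (apply pow_lt; lra). lra. }
  destruct (INR_unbounded (L / rho)) as [k Hk].
  assert (p2 : 0 < 2^k) by (apply pow_lt; lra).
  assert (Hk2 : INR k <= 2^k).
  { clear. induction k. simpl; lra. rewrite S_INR. simpl.
    assert (1 <= 2^k) by (apply pow_R1_Rle; lra). lra. }
  assert (HL : L / 2^k < rho).
  { apply Rmult_lt_reg_r with (2^k); auto. unfold Rdiv. rewrite Rmult_assoc, Rinv_l by lra.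
    assert (L / rho * rho = L) by (field; lra).
    assert (L < 2^k * rho).
    { apply Rmult_lt_reg_r with (/rho). apply Rinv_0_lt_compat; auto.
      rewrite Rmult_assoc, Rinv_r by lra. unfold Rdiv in Hk. lra. }
    lra. }
  destruct (Inv k) as (i1&i2&i3&i4&i5&i6&i7&_).
  assert (0 < (b0-a0)/2^k) by (apply Rdiv_lt_0_compat; lra).
  assert (0 < (d0-c0)/2^k) by (apply Rdiv_lt_0_compat; lra).
  assert (L / 2^k = (b0-a0)/2^k + (d0-c0)/2^k) by (unfold L; field; lra).
  specialize (Hrho (qa (Q k)) (qb (Q k)) (qc (Q k)) (qd (Q k))).
  destruct (Hxk k), (Hyk k).
  assert (Hb := Hrho ltac:(lra) ltac:(lra) ltac:(lra) ltac:(lra) ltac:(lra) ltac:(lra)).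
  unfold Iq in i7.
  rewrite i3, i6 in Hb.
  assert (E4 : 4^k = (2^k)^2). { rewrite <- pow_mult. replace 4 with (2^2) by (simpl; lra). rewrite <- pow_mult. f_equal. lia. }
  assert ((b0 - a0) / 2 ^ k + (d0 - c0) / 2 ^ k = L / 2^k) as Hs by lra.
  rewrite Hs in Hb.
  assert (mu / 2 / 4^k < mu / 4^k).
  { rewrite E4. apply Rmult_lt_compat_r. apply Rinv_0_lt_compat; apply pow_lt; lra. lra. }
  assert (mu / (2 * L^2) * (L / 2^k)^2 = mu / 2 / 4^k).
  { rewrite E4. field. split; lra. }
  lra.
Qed.

Lemma normCR (x : C) : @norm _ C_R_NormedModule x = Cmod x.
Proof. destruct x as [x1 x2]. unfold norm. simpl. unfold prod_norm. simpl. unfold norm; simpl. unfold abs; simpl. unfold Cmod; simpl.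
 rewrite !Rmult_1_r. rewrite <- !Rabs_mult, !Rabs_right; try reflexivity; nra. Qed.

Lemma fst_le_Cmod (z : C) : Rabs (fst z) <= Cmod z.
Proof. pose proof (Rmax_Cmod z). pose proof (Rmax_l (Rabs (fst z)) (Rabs (snd z))). lra. Qed.
Lemma snd_le_Cmod (z : C) : Rabs (snd z) <= Cmod z.
Proof. pose proof (Rmax_Cmod z). pose proof (Rmax_r (Rabs (fst z)) (Rabs (snd z))). lra. Qed.

Lemma cont_RC (h : R -> C) (x : R) :
  (forall eta, 0 < eta -> exists rho, 0 < rho /\ forall y, Rabs (y - x) < rho -> Cmod (h y - h x) < eta) ->
  @continuous R_UniformSpace C_R_CompleteNormedModule h x.
Proof.
  intros H. unfold continuous. apply (filterlim_locally (F := locally x)). intros eps.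
  destruct (H eps (cond_pos eps)) as [rho [Hr Hy]].
  exists (mkposreal rho Hr). intros y Hb. specialize (Hy y Hb).
  split; simpl.
  - unfold ball; simpl. unfold AbsRing_ball; simpl. unfold abs, minus, plus, opp; simpl.
    pose proof (fst_le_Cmod (h y - h x)%C). simpl in H0. lra.
  - unfold ball; simpl. unfold AbsRing_ball; simpl. unfold abs, minus, plus, opp; simpl.
    pose proof (snd_le_Cmod (h y - h x)%C). simpl in H0. lra.
Qed.


Definition cis (t : R) : C := (cos t, sin t).
Definition Pp (c : C) (r t : R) : C := (c + RtoC r * cis t)%C.
Definition ContC (F : C -> C) (w : C) : Prop :=
  forall eta, 0 < eta -> exists rho, 0 < rho /\ forall z, Cmod (z - w) < rho -> Cmod (F z - F w) < eta.

Lemma Cmod_sqr (z : C) : Cmod z ^ 2 = fst z ^ 2 + snd z ^ 2.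
Proof. destruct z as [x y]. unfold Cmod. simpl. rewrite !Rmult_1_r, sqrt_sqrt. ring. nra. Qed.

Lemma Cmod_le_of_sqr (z : C) (B : R) : 0 <= B -> fst z ^ 2 + snd z ^ 2 <= B ^ 2 -> Cmod z <= B.
Proof. intros HB H. rewrite <- Cmod_sqr in H. pose proof (Cmod_ge_0 z).
  destruct (Rle_dec (Cmod z) B); auto. nra. Qed.

Lemma Cmod_cis t : Cmod (cis t) = 1.
Proof. unfold cis. unfold Cmod. simpl. rewrite !Rmult_1_r. 
  rewrite <- (sqrt_1). f_equal. pose proof (sin2_cos2 t). unfold Rsqr in H. lra. Qed.

Lemma one_minus_cos_le u : Rabs u <= 1 -> 1 - cos u <= u ^ 2 / 2.
Proof. intros Hu. assert (Hb : - PI / 2 <= u <= PI / 2).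
  { pose proof PI2_3_2. apply Rabs_le_between in Hu. lra. }
  destruct (COS u) as [H1 _]; try lra. unfold cos_lb, cos_approx in H1. simpl in H1.
  assert (u^2 <= 1). { rewrite <- Rsqr_pow2. replace 1 with (Rsqr 1) by (unfold Rsqr; ring). apply Rsqr_le_abs_1. rewrite Rabs_R1. auto. }
  unfold cos_term in H1. simpl in H1. assert (h4 : 0 <= u^4 * (1 - u^2)) by (apply Rmult_le_pos; [replace (u^4) with ((u^2)^2) by ring; apply pow2_ge_0|]; lra). assert (0 <= u^2) by nra. nra.
Qed.

Lemma Cmod_cis_diff t s : Cmod (cis t - cis s) <= 2 * Rabs (t - s).
Proof.
  destruct (Rle_dec 1 (Rabs (t - s))) as [H|H].
  - pose proof (Cmod_triangle (cis t) (- cis s)). rewrite Cmod_opp, !Cmod_cis in H0.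
    unfold Cminus. lra.
  - apply Cmod_le_of_sqr. pose proof (Rabs_pos (t-s)); lra.
    unfold cis; simpl.
    assert (E : (cos t + - cos s) * ((cos t + - cos s) * 1) + (sin t + - sin s) * ((sin t + - sin s) * 1) = 2 - 2 * cos (t - s)).
    { rewrite cos_minus. pose proof (sin2_cos2 t). pose proof (sin2_cos2 s). unfold Rsqr in *. nra. }
    rewrite E.
    pose proof (one_minus_cos_le (t - s) ltac:(lra)).
    assert ((t - s)^2 = Rabs (t - s) ^ 2) by (rewrite pow2_abs; reflexivity).
    nra.
Qed.

Lemma Pp_r c r r' t : Cmod (Pp c r t - Pp c r' t) = Rabs (r - r').
Proof. replace (Pp c r t - Pp c r' t)%C with (RtoC (r - r') * cis t)%C.
  rewrite Cmod_mult, Cmod_cis, Cmod_R. ring.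
  unfold Pp, cis, RtoC. apply injective_projections; simpl; ring. Qed.

Lemma Pp_t c r t t' : Cmod (Pp c r t - Pp c r t') <= Rabs r * (2 * Rabs (t - t')).
Proof. replace (Pp c r t - Pp c r t')%C with (RtoC r * (cis t - cis t'))%C.
  rewrite Cmod_mult, Cmod_R. apply Rmult_le_compat_l. apply Rabs_pos. apply Cmod_cis_diff.
  unfold Pp, cis, RtoC. apply injective_projections; simpl; ring. Qed.

Lemma Pp_c c r t : Cmod (Pp c r t - c) = Rabs r.
Proof. replace (Pp c r t - c)%C with (RtoC r * cis t)%C.
  rewrite Cmod_mult, Cmod_cis, Cmod_R. ring.
  unfold Pp, cis, RtoC. apply injective_projections; simpl; ring. Qed.

Lemma cont_V (F : C -> C) c r t : ContC F (Pp c r t) ->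
  @continuous R_UniformSpace C_R_CompleteNormedModule (fun s => F (Pp c r s)) t.
Proof. intros HF. apply cont_RC. intros eta He. destruct (HF eta He) as [rho [Hr Hz]].
  exists (rho / (2 * (Rabs r + 1))). split.
  { apply Rdiv_lt_0_compat; auto. pose proof (Rabs_pos r). lra. }
  intros y Hy. apply Hz. eapply Rle_lt_trans. apply Pp_t.
  pose proof (Rabs_pos r). 
  assert (Rabs r * (2 * Rabs (y - t)) <= (Rabs r + 1) * (2 * Rabs (y - t))).
  { pose proof (Rabs_pos (y - t)). nra. }
  assert ((Rabs r + 1) * (2 * Rabs (y - t)) < rho).
  { apply Rmult_lt_reg_r with (/ (2 * (Rabs r + 1))). apply Rinv_0_lt_compat; lra.
    replace ((Rabs r + 1) * (2 * Rabs (y - t)) * / (2 * (Rabs r + 1))) with (Rabs (y - t)) by (field; lra).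
    exact Hy. }
  lra.
Qed.

Lemma cont_Hr (F : C -> C) c r t : ContC F (Pp c r t) ->
  @continuous R_UniformSpace C_R_CompleteNormedModule (fun s => F (Pp c s t)) r.
Proof. intros HF. apply cont_RC. intros eta He. destruct (HF eta He) as [rho [Hr Hz]].
  exists rho. split; auto. intros y Hy. apply Hz. rewrite Pp_r. auto. Qed.

Lemma ex_V (F : C -> C) c r a b : (forall t, ContC F (Pp c r t)) ->
  ex_RInt (V := C_R_CompleteNormedModule) (fun t => F (Pp c r t)) a b.
Proof. intros H. apply ex_RInt_continuous. intros. apply cont_V. auto. Qed.

Lemma ex_H (F : C -> C) c t a b : 0 < a -> a <= b -> (forall r, a <= r <= b -> ContC F (Pp c r t)) ->
  ex_RInt (V := C_R_CompleteNormedModule) (fun r => scal (/ r) (F (Pp c r t))) a b.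
Proof. intros Ha Hab H. apply ex_RInt_continuous. intros z Hz.
  rewrite Rmin_left in Hz by lra. rewrite Rmax_right in Hz by lra.
  apply (continuous_scal (fun r => / r) (fun r => F (Pp c r t))).
  - apply continuous_Rinv. lra.
  - apply cont_Hr. apply H. lra.
Qed.

Definition DiffC (F : C -> C) (w : C) : Prop :=
  exists l : C, forall eta, 0 < eta -> exists rho, 0 < rho /\ forall z, Cmod (z - w) < rho ->
    Cmod (F z - F w - l * (z - w)) <= eta * Cmod (z - w).

Lemma DiffC_ContC F w : DiffC F w -> ContC F w.
Proof.
  intros [l Hl] eta He. destruct (Hl 1 ltac:(lra)) as [rho [Hr Hz]].
  exists (Rmin rho (eta / (Cmod l + 2))). split.
  { apply Rmin_pos; auto. apply Rdiv_lt_0_compat; auto. pose proof (Cmod_ge_0 l); lra. }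
  intros z Hzw. assert (h1 : Cmod (z - w) < rho) by (eapply Rlt_le_trans; [exact Hzw| apply Rmin_l]).
  assert (h2 : Cmod (z - w) < eta / (Cmod l + 2)) by (eapply Rlt_le_trans; [exact Hzw| apply Rmin_r]).
  specialize (Hz z h1).
  replace (F z - F w)%C with ((F z - F w - l * (z - w)) + l * (z - w))%C by ring.
  eapply Rle_lt_trans. apply Cmod_triangle. rewrite Cmod_mult.
  pose proof (Cmod_ge_0 l). pose proof (Cmod_ge_0 (z - w)).
  assert (Cmod (z - w) * (Cmod l + 2) < eta).
  { apply Rmult_lt_reg_r with (/ (Cmod l + 2)). apply Rinv_0_lt_compat; lra.
    rewrite Rmult_assoc, Rinv_r by lra. unfold Rdiv in h2. lra. }
  nra.
Qed.

Definition Hint (F : C -> C) c t a b : C :=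
  RInt (V := C_R_CompleteNormedModule) (fun r => scal (/ r) (F (Pp c r t))) a b.
Definition Vint (F : C -> C) c r a b : C :=
  RInt (V := C_R_CompleteNormedModule) (fun t => F (Pp c r t)) a b.
Definition Irect (F : C -> C) c a b t1 t2 : C :=
  (Hint F c t1 a b - Hint F c t2 a b + Ci * (Vint F c b t1 t2 - Vint F c a t1 t2))%C.

Lemma chasC (f : R -> C) a m b :
  ex_RInt (V := C_R_CompleteNormedModule) f a m -> ex_RInt (V := C_R_CompleteNormedModule) f m b ->
  RInt (V := C_R_CompleteNormedModule) f a b =
  (RInt (V := C_R_CompleteNormedModule) f a m + RInt (V := C_R_CompleteNormedModule) f m b)%C.
Proof. intros H1 H2. rewrite <- (RInt_Chasles (V := C_R_CompleteNormedModule) f a m b H1 H2). reflexivity. Qed.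

Lemma minusC (f g : R -> C) a b :
  ex_RInt (V := C_R_CompleteNormedModule) f a b -> ex_RInt (V := C_R_CompleteNormedModule) g a b ->
  (RInt (V := C_R_CompleteNormedModule) f a b - RInt (V := C_R_CompleteNormedModule) g a b)%C =
  RInt (V := C_R_CompleteNormedModule) (fun x => f x - g x)%C a b.
Proof. intros H1 H2. exact (eq_sym (RInt_minus (V := C_R_CompleteNormedModule) f g a b H1 H2)). Qed.

Lemma RInt_bound (f : R -> C) a b B : a <= b -> ex_RInt (V := C_R_CompleteNormedModule) f a b ->
  (forall x, a <= x <= b -> Cmod (f x) <= B) ->
  Cmod (RInt (V := C_R_CompleteNormedModule) f a b) <= (b - a) * B.
Proof.
  intros Hab Hex Hb. rewrite <- normCR.
  apply (norm_RInt_le (V := C_R_CompleteNormedModule) f (fun _ => B) a b _ _ Hab).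
  - intros x Hx. rewrite normCR. auto.
  - apply RInt_correct. auto.
  - apply (is_RInt_const a b B).
Qed.

Lemma is_RInt_cis (K : C) c d :
  is_RInt (V := C_R_CompleteNormedModule) (fun t => (K * cis t)%C) c d ((- Ci * K * (cis d - cis c))%C).
Proof.
  destruct K as [k1 k2].
  replace ((- Ci * (k1, k2) * (cis d - cis c))%C) with
    ((k1 * sin d + k2 * cos d) - (k1 * sin c + k2 * cos c),
     (- k1 * cos d + k2 * sin d) - (- k1 * cos c + k2 * sin c)).
  2: { unfold cis, Ci. apply injective_projections; simpl; ring. }
  apply (is_RInt_ext (V := C_R_CompleteNormedModule) (fun t => (k1 * cos t - k2 * sin t, k1 * sin t + k2 * cos t))).
  { intros x _. unfold cis. apply injective_projections; simpl; ring. }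
  apply (is_RInt_fct_extend_pair (U := R_NormedModule) (V := R_NormedModule)); simpl.
  - apply (is_RInt_derive (V := R_CompleteNormedModule) (fun t => k1 * sin t + k2 * cos t)).
    + intros x _. auto_derive; auto. ring.
    + intros x _. apply (ex_derive_continuous (K := R_AbsRing) (V := R_NormedModule)). auto_derive. auto.
  - apply (is_RInt_derive (V := R_CompleteNormedModule) (fun t => - k1 * cos t + k2 * sin t)).
    + intros x _. auto_derive; auto. ring.
    + intros x _. apply (ex_derive_continuous (K := R_AbsRing) (V := R_NormedModule)). auto_derive. auto.
Qed.

Lemma DiffC_affine (w0 l w : C) z : DiffC (fun x => (w0 + l * (x - w))%C) z.
Proof. exists l. intros eta He. exists 1. split; [lra|]. intros y _.
  replace ((w0 + l * (y - w)) - (w0 + l * (z - w)) - l * (y - z))%C with (RtoC 0) by ring.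
  rewrite Cmod_0. pose proof (Cmod_ge_0 (y - z)). nra. Qed.

Lemma Irect_affine (w0 l w c : C) a b t1 t2 : 0 < a -> a <= b ->
  Irect (fun x => (w0 + l * (x - w))%C) c a b t1 t2 = RtoC 0.
Proof.
  intros Ha Hab. set (FA := fun x => (w0 + l * (x - w))%C).
  assert (HC : forall z, ContC FA z) by (intro; apply DiffC_ContC, DiffC_affine).
  unfold Irect, Hint, Vint.
  rewrite (minusC (fun r => scal (/ r) (FA (Pp c r t1))) (fun r => scal (/ r) (FA (Pp c r t2))))
    by (apply ex_H; auto; lra).
  rewrite (minusC (fun t => FA (Pp c b t)) (fun t => FA (Pp c a t))) by (apply ex_V; auto).
  rewrite (RInt_ext (V := C_R_CompleteNormedModule) _ (fun _ => (l * (cis t1 - cis t2))%C)).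
  2: { intros x Hx. rewrite Rmin_left in Hx by lra. rewrite Rmax_right in Hx by lra.
       unfold FA, Pp, cis, scal; simpl. unfold mult; simpl. apply injective_projections; simpl; unfold scal; simpl; unfold mult; simpl; field; lra. }
  rewrite RInt_const.
  rewrite (RInt_ext (V := C_R_CompleteNormedModule) _ (fun t => ((l * RtoC (b - a)) * cis t)%C)).
  2: { intros x _. unfold FA, Pp. ring_simplify. unfold RtoC. apply injective_projections; simpl; ring. }
  rewrite (is_RInt_unique _ _ _ _ (is_RInt_cis (l * RtoC (b - a)) t1 t2)).
  unfold scal; simpl. unfold mult; simpl. destruct l as [l1 l2]. unfold cis, Ci, RtoC.
  apply injective_projections; simpl; unfold scal; simpl; unfold mult; simpl; ring.
Qed.

Lemma scal_RtoC (s : R) (z : C) : @scal _ C_R_ModuleSpace s z = (RtoC s * z)%C.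
Proof. destruct z as [z1 z2]. unfold RtoC. apply injective_projections; simpl; unfold scal; simpl; unfold mult; simpl; ring. Qed.

Lemma scal_minus_C (s : R) (x y : C) :
  Cminus (@scal _ C_R_ModuleSpace s x) (@scal _ C_R_ModuleSpace s y) = @scal _ C_R_ModuleSpace s (Cminus x y).
Proof. rewrite !scal_RtoC. ring. Qed.

Lemma ContC_minus F G w : ContC F w -> ContC G w -> ContC (fun z => F z - G z)%C w.
Proof. intros HF HG eta He. destruct (HF (eta/2) ltac:(lra)) as [r1 [h1 H1]].
  destruct (HG (eta/2) ltac:(lra)) as [r2 [h2 H2]].
  exists (Rmin r1 r2). split. apply Rmin_pos; auto. intros z Hz.
  assert (a1 : Cmod (z - w) < r1) by (eapply Rlt_le_trans; [exact Hz|apply Rmin_l]).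
  assert (a2 : Cmod (z - w) < r2) by (eapply Rlt_le_trans; [exact Hz|apply Rmin_r]).
  specialize (H1 z a1). specialize (H2 z a2).
  replace (F z - G z - (F w - G w))%C with ((F z - F w) + - (G z - G w))%C by ring.
  eapply Rle_lt_trans. apply Cmod_triangle. rewrite Cmod_opp. lra. Qed.

Lemma Irect_minus F G c a b t1 t2 : 0 < a -> a <= b ->
  (forall r t, a <= r <= b -> ContC F (Pp c r t) /\ ContC G (Pp c r t)) ->
  (Irect F c a b t1 t2 - Irect G c a b t1 t2)%C = Irect (fun z => F z - G z)%C c a b t1 t2.
Proof.
  intros Ha Hab HC. unfold Irect, Hint, Vint.
  assert (E1 : forall t, Cminus (RInt (V := C_R_CompleteNormedModule) (fun r => scal (/ r) (F (Pp c r t))) a b)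
     (RInt (V := C_R_CompleteNormedModule) (fun r => scal (/ r) (G (Pp c r t))) a b) =
     RInt (V := C_R_CompleteNormedModule) (fun r => scal (/ r) (Cminus (F (Pp c r t)) (G (Pp c r t)))) a b).
  { intro t. rewrite minusC. apply (RInt_ext (V := C_R_CompleteNormedModule)). intros x _. apply scal_minus_C.
    apply ex_H; auto. intros r Hr. apply HC; auto.
    apply ex_H; auto. intros r Hr. apply HC; auto. }
  assert (E2 : forall r, a <= r <= b -> (RInt (V := C_R_CompleteNormedModule) (fun t => F (Pp c r t)) t1 t2 -
     RInt (V := C_R_CompleteNormedModule) (fun t => G (Pp c r t)) t1 t2)%C =
     RInt (V := C_R_CompleteNormedModule) (fun t => F (Pp c r t) - G (Pp c r t))%C t1 t2).
  { intros r Hr. rewrite minusC. reflexivity.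
    apply ex_V. intros t. apply HC; auto. apply ex_V. intros t. apply HC; auto. }
  rewrite <- (E1 t1), <- (E1 t2), <- (E2 b), <- (E2 a) by lra. ring.
Qed.

Lemma Irect_bound E c a b t1 t2 K : 0 < a -> a <= b -> t1 <= t2 ->
  (forall r t, a <= r <= b -> ContC E (Pp c r t)) ->
  (forall r t, a <= r <= b -> t1 <= t <= t2 -> Cmod (E (Pp c r t)) <= K) ->
  Cmod (Irect E c a b t1 t2) <= 2 * (b - a) * (K / a) + 2 * (t2 - t1) * K.
Proof.
  intros Ha Hab Ht HC HK. unfold Irect.
  assert (K0 : 0 <= K). { specialize (HK a t1 ltac:(lra) ltac:(lra)). pose proof (Cmod_ge_0 (E (Pp c a t1))). lra. }
  assert (BH : forall t, t1 <= t <= t2 -> Cmod (Hint E c t a b) <= (b - a) * (K / a)).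
  { intros t Htt. apply RInt_bound. lra. apply ex_H; auto.
    intros x Hx. rewrite scal_RtoC, Cmod_mult, Cmod_R. rewrite Rabs_pos_eq.
    2: { apply Rlt_le, Rinv_0_lt_compat. lra. }
    specialize (HK x t Hx Htt). unfold Rdiv.
    assert (/ x <= / a) by (apply Rinv_le_contravar; lra).
    pose proof (Cmod_ge_0 (E (Pp c x t))).
    assert (0 < / x) by (apply Rinv_0_lt_compat; lra). nra. }
  assert (BV : forall r, a <= r <= b -> Cmod (Vint E c r t1 t2) <= (t2 - t1) * K).
  { intros r Hr. apply RInt_bound. lra. apply ex_V; auto.
    intros x Hx. apply HK; auto. }
  pose proof (BH t1 ltac:(lra)). pose proof (BH t2 ltac:(lra)).
  pose proof (BV a ltac:(lra)). pose proof (BV b ltac:(lra)).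
  eapply Rle_trans. apply Cmod_triangle.
  rewrite Cmod_mult. assert (Cmod Ci = 1) as -> by (unfold Cmod, Ci; simpl; rewrite Rmult_0_l, Rplus_0_l, !Rmult_1_r; apply sqrt_1).
  pose proof (Cmod_triangle (Hint E c t1 a b) (- Hint E c t2 a b)).
  pose proof (Cmod_triangle (Vint E c b t1 t2) (- Vint E c a t1 t2)).
  rewrite Cmod_opp in *. unfold Cminus. lra.
Qed.

Lemma polar_goursat F c Rr r1 r2 t1 t2 :
  (forall w, Cmod (w - c) < Rr -> DiffC F w) ->
  0 < r1 -> r1 < r2 -> r2 < Rr -> t1 < t2 -> Irect F c r1 r2 t1 t2 = RtoC 0.
Proof.
  intros HD H1 H12 H2 Ht.
  assert (HC : forall r t, 0 <= r < Rr -> ContC F (Pp c r t)).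
  { intros r t Hr. apply DiffC_ContC, HD. rewrite Pp_c, Rabs_pos_eq; lra. }
  apply (goursat_abstract (fun a b cc d => Irect F c a b cc d)); auto.
  - intros a b cc d Ha Hab Hb Hc Hcd Hd.
    set (m := (a + b) / 2). set (n := (cc + d) / 2).
    assert (am : a < m < b) by (unfold m; lra). assert (cn : cc < n < d) by (unfold n; lra).
    unfold Irect, Hint, Vint.
    rewrite (chasC (fun r => scal (/ r) (F (Pp c r cc))) a m b) by (apply ex_H; try lra; intros; apply HC; lra).
    rewrite (chasC (fun r => scal (/ r) (F (Pp c r d))) a m b) by (apply ex_H; try lra; intros; apply HC; lra).
    rewrite (chasC (fun t => F (Pp c b t)) cc n d) by (apply ex_V; intros; apply HC; lra).
    rewrite (chasC (fun t => F (Pp c a t)) cc n d) by (apply ex_V; intros; apply HC; lra).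
    ring.
  - intros x y Hx Hy eta Heta.
    set (w := Pp c x y).
    destruct (HD w) as [l Hl]. { unfold w. rewrite Pp_c, Rabs_pos_eq; lra. }
    set (K0 := 2 * (1 + 2 * Rr) * (1 + / r1)).
    assert (K0pos : 0 < K0). { unfold K0. assert (0 < / r1) by (apply Rinv_0_lt_compat; lra). nra. }
    destruct (Hl (eta / K0)) as [rho' [Hr' Hz]]. { apply Rdiv_lt_0_compat; lra. }
    exists (rho' / (2 * (1 + 2 * Rr))). split. { apply Rdiv_lt_0_compat; lra. }
    intros a b cc d Ha Hb Hc Hd Hba Hdc.
    set (FA := fun z => (F w + l * (z - w))%C).
    assert (E0 : Irect F c a b cc d = Irect (fun z => F z - FA z)%C c a b cc d).
    { assert (A0 : Irect FA c a b cc d = RtoC 0) by (unfold FA; apply Irect_affine; lra).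
      rewrite <- Irect_minus. rewrite A0. ring. lra. lra.
      intros r t Hr. split. apply HC; lra. apply DiffC_ContC, DiffC_affine. }
    rewrite E0. set (s := (b - a) + (d - cc)).
    assert (rs : (1 + 2 * Rr) * s < rho').
    { apply Rmult_lt_reg_r with (/ (2 * (1 + 2 * Rr))). apply Rinv_0_lt_compat; lra.
      assert (rho' / (2 * (1 + 2 * Rr)) = rho' * / (2 * (1 + 2 * Rr))) by reflexivity.
      replace ((1 + 2 * Rr) * s * / (2 * (1 + 2 * Rr))) with (s / 2) by (field; lra).
      unfold s. lra. }
    assert (s0 : 0 <= s) by (unfold s; lra).
    eapply Rle_trans.
    apply (Irect_bound _ c a b cc d ((eta / K0) * ((1 + 2 * Rr) * s))); try lra.
    + intros r t Hr. apply ContC_minus. apply HC; lra. apply DiffC_ContC, DiffC_affine.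
    + intros r t Hr Ht'.
      assert (Hd' : Cmod (Pp c r t - w) <= (1 + 2 * Rr) * s).
      { unfold w. replace (Pp c r t - Pp c x y)%C with ((Pp c r t - Pp c x t) + (Pp c x t - Pp c x y))%C by ring.
        eapply Rle_trans. apply Cmod_triangle. rewrite Pp_r.
        pose proof (Pp_t c x t y).
        rewrite (Rabs_pos_eq x) in H by lra.
        assert (Rabs (r - x) <= b - a) by (apply Rabs_le; lra).
        assert (Rabs (t - y) <= d - cc) by (apply Rabs_le; lra).
        assert (x * (2 * Rabs (t - y)) <= Rr * (2 * (d - cc))).
        { apply Rmult_le_compat; try lra. pose proof (Rabs_pos (t - y)); lra. }
        unfold s. nra. }
      specialize (Hz (Pp c r t) ltac:(lra)). unfold FA.
      replace (F (Pp c r t) - (F w + l * (Pp c r t - w)))%C with (F (Pp c r t) - F w - l * (Pp c r t - w))%C by ring.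
      eapply Rle_trans. exact Hz. apply Rmult_le_compat_l; auto. apply Rlt_le, Rdiv_lt_0_compat; lra.
    + assert (ia : / a <= / r1) by (apply Rinv_le_contravar; lra).
      assert (0 < / a) by (apply Rinv_0_lt_compat; lra).
      set (K := eta / K0 * ((1 + 2 * Rr) * s)).
      assert (K0' : 0 <= K). { unfold K. apply Rmult_le_pos. apply Rlt_le, Rdiv_lt_0_compat; lra. nra. }
      assert (2 * (b - a) * (K / a) + 2 * (d - cc) * K <= 2 * s * K * (1 + / r1)).
      { unfold Rdiv. assert ((b - a) * (K * / a) <= s * (K * / r1)).
        { apply Rmult_le_compat; try lra. apply Rmult_le_pos; lra. unfold s; lra. apply Rmult_le_compat_l; lra. }
        assert ((d - cc) * K <= s * K) by (apply Rmult_le_compat_r; unfold s; lra).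
        nra. }
      assert (2 * s * K * (1 + / r1) = eta * (s ^ 2)).
      { unfold K, K0. field. split; lra. }
      unfold s in *. lra.
Qed.

Lemma mv_bound F c Rr r B :
  (forall w, Cmod (w - c) < Rr -> DiffC F w) -> 0 < r -> r < Rr ->
  (forall t, 0 <= t <= 2 * PI -> Cmod (F (Pp c r t)) <= B) -> Cmod (F c) <= B.
Proof.
  intros HD Hr HrR HB.
  assert (HC : forall s t, 0 <= s < Rr -> ContC F (Pp c s t)).
  { intros s t Hs. apply DiffC_ContC, HD. rewrite Pp_c, Rabs_pos_eq; lra. }
  assert (P2 : 0 < 2 * PI) by (pose proof PI_RGT_0; lra).
  assert (Step1 : forall s, 0 < s < r -> Vint F c r 0 (2 * PI) = Vint F c s 0 (2 * PI)).
  { intros s Hs. pose proof (polar_goursat F c Rr s r 0 (2 * PI) HD ltac:(lra) ltac:(lra) ltac:(lra) P2) as G.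
    unfold Irect in G.
    assert (EH : Hint F c 0 s r = Hint F c (2 * PI) s r).
    { unfold Hint. apply (RInt_ext (V := C_R_CompleteNormedModule)). intros x _.
      unfold Pp, cis. rewrite cos_2PI, sin_2PI, cos_0, sin_0. reflexivity. }
    rewrite EH in G.
    assert (G' : (Ci * (Vint F c r 0 (2 * PI) - Vint F c s 0 (2 * PI)))%C = RtoC 0).
    { rewrite <- G. ring. }
    assert (G'' : ((- Ci) * (Ci * (Vint F c r 0 (2 * PI) - Vint F c s 0 (2 * PI))))%C = RtoC 0).
    { rewrite G'. ring. }
    replace ((- Ci) * (Ci * (Vint F c r 0 (2 * PI) - Vint F c s 0 (2 * PI))))%C
      with (Vint F c r 0 (2 * PI) - Vint F c s 0 (2 * PI))%C in G''.
    2: { unfold Ci. apply injective_projections; simpl; ring. }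
    transitivity ((Vint F c r 0 (2 * PI) - Vint F c s 0 (2 * PI)) + Vint F c s 0 (2 * PI))%C; [ring|].
    rewrite G''. ring. }
  assert (BR : Cmod (Vint F c r 0 (2 * PI)) <= (2 * PI - 0) * B).
  { apply RInt_bound. lra. apply ex_V. intros; apply HC; lra. auto. }
  apply Rnot_lt_le. intro Hlt.
  set (eta := (Cmod (F c) - B) / 2).
  assert (Heta : 0 < eta) by (unfold eta; lra).
  destruct (HC 0 0 ltac:(lra) eta Heta) as [rho [Hrho Hz]].
  replace (Pp c 0 0) with c in Hz.
  2: { unfold Pp, cis, RtoC. destruct c. apply injective_projections; simpl; ring. }
  set (s := Rmin (r / 2) (rho / 2)).
  assert (s1 : 0 < s) by (apply Rmin_pos; lra).
  assert (s2 : s < r) by (unfold s; pose proof (Rmin_l (r/2) (rho/2)); lra).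
  assert (s3 : s < rho) by (unfold s; pose proof (Rmin_r (r/2) (rho/2)); lra).
  rewrite (Step1 s ltac:(lra)) in BR.
  assert (BE : Cmod (Vint F c s 0 (2 * PI) - RtoC (2 * PI) * F c) <= (2 * PI - 0) * eta).
  { unfold Vint.
    replace (RtoC (2 * PI) * F c)%C with (RInt (V := C_R_CompleteNormedModule) (fun _ => F c) 0 (2 * PI)).
    2: { rewrite RInt_const. rewrite scal_RtoC. f_equal. f_equal. ring. }
    rewrite minusC. 2: apply ex_V; intros; apply HC; lra.
    2: { apply ex_RInt_const. }
    apply RInt_bound. lra.
    { apply (ex_RInt_minus (V := C_R_CompleteNormedModule)). apply ex_V; intros; apply HC; lra. apply ex_RInt_const. }
    intros x Hx. apply Rlt_le, Hz. rewrite Pp_c, Rabs_pos_eq; lra. }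
  pose proof (Cmod_triangle (Vint F c s 0 (2 * PI) - RtoC (2 * PI) * F c) (- Vint F c s 0 (2 * PI))).
  rewrite Cmod_opp in H.
  replace (Vint F c s 0 (2 * PI) - RtoC (2 * PI) * F c + - Vint F c s 0 (2 * PI))%C with (- (RtoC (2 * PI) * F c))%C in H by ring.
  rewrite Cmod_opp, Cmod_mult, Cmod_R, Rabs_pos_eq in H by lra.
  unfold eta in *. nra.
Qed.

Lemma ex_derive_DiffC (f : C -> C) z :
  ex_derive (K := C_AbsRing) (V := C_NormedModule) f z -> DiffC f z.
Proof.
  intros [l [Hlin Hd]]. exists l. intros eta He.
  specialize (Hd z (fun P H => H)).
  specialize (Hd (mkposreal eta He)).
  apply (locally_le_locally_norm (K := C_AbsRing) (V := AbsRing_NormedModule C_AbsRing)) in Hd.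
  destruct Hd as [rho Hrho]. exists rho. split. apply cond_pos.
  intros y Hy. specialize (Hrho y). simpl in Hrho.
  assert (H := Hrho Hy). rewrite (Cmult_comm l). exact H.
Qed.
Lemma conv1 (f : C -> C) z l : is_derive (K := C_AbsRing) (V := C_NormedModule) f z l ->
  is_derive (K := C_AbsRing) (V := AbsRing_NormedModule C_AbsRing) f z l.
Proof. intros [H1 H2]. split.
  - destruct H1 as [a1 a2 [M [HM a3]]]. split; auto. exists M. split; auto.
  - intros x Hx eps. specialize (H2 x Hx eps). exact H2. Qed.
Lemma conv2 (f : C -> C) z l : is_derive (K := C_AbsRing) (V := AbsRing_NormedModule C_AbsRing) f z l ->
  is_derive (K := C_AbsRing) (V := C_NormedModule) f z l.
Proof. intros [H1 H2]. split.
  - destruct H1 as [a1 a2 [M [HM a3]]]. split; auto. exists M. split; auto.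
  - intros x Hx eps. specialize (H2 x Hx eps). exact H2. Qed.

Definition rot (d th : R) (z : C) : C := (RtoC d + cis th * (z - RtoC d))%C.

Lemma rot_derive d th z : is_derive (K := C_AbsRing) (V := AbsRing_NormedModule C_AbsRing) (rot d th) z (cis th).
Proof.
  assert (H1 := is_derive_minus (K := C_AbsRing) (V := AbsRing_NormedModule C_AbsRing) (fun t => t) (fun _ => RtoC d) z one zero (is_derive_id z) (is_derive_const _ z)).
  assert (H2 := is_derive_scal_l (K := C_AbsRing) (V := AbsRing_NormedModule C_AbsRing) _ z _ (cis th) H1).
  assert (H3 := is_derive_plus (K := C_AbsRing) (V := AbsRing_NormedModule C_AbsRing) (fun _ => RtoC d) _ z _ _ (is_derive_const _ z) H2).
  eapply is_derive_ext in H3.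
  2: { intro t. simpl. reflexivity. }
  replace (cis th) with (plus (zero (G := AbsRing_NormedModule C_AbsRing)) (scal (minus (one (K:=C_AbsRing)) (zero (G := C_AbsRing))) (cis th))).
  2: { unfold cis. simpl. unfold plus, scal, minus, one, zero, opp, mult; simpl. apply injective_projections; simpl; ring. }
  eapply is_derive_ext. 2: exact H3.
  intro t. unfold rot. simpl. unfold plus, scal, minus, one, zero, opp, mult; simpl. unfold cis.
  apply injective_projections; simpl; ring.
Qed.

Fixpoint Fprod (g : C -> C) (d ph : R) (n : nat) (z : C) : C :=
  match n with
  | O => RtoC 1
  | S m => (Fprod g d ph m z * g (rot d (INR m * ph) z))%C
  end.

Lemma Fprod_derive g d ph n z :
  (forall k, ex_derive (K := C_AbsRing) (V := C_NormedModule) g (rot d (INR k * ph) z)) ->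
  ex_derive (K := C_AbsRing) (V := AbsRing_NormedModule C_AbsRing) (Fprod g d ph n) z.
Proof.
  intros Hg. induction n as [|m IH].
  - exists zero. simpl. apply (is_derive_const (K := C_AbsRing) (V := AbsRing_NormedModule C_AbsRing)).
  - destruct IH as [l1 H1]. destruct (Hg m) as [l2 H2].
    assert (H3 := is_derive_comp (K := C_AbsRing) (V := C_NormedModule) g (rot d (INR m * ph)) z l2 _ H2 (rot_derive d (INR m * ph) z)).
    apply conv1 in H3.
    assert (H4 := is_derive_mult (K := C_AbsRing) _ _ z _ _ H1 H3 Cmult_comm).
    eexists. eapply is_derive_ext. 2: exact H4. intro t. reflexivity.
Qed.

Lemma Fprod_DiffC g d ph n z :
  (forall k, ex_derive (K := C_AbsRing) (V := C_NormedModule) g (rot d (INR k * ph) z)) ->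
  DiffC (Fprod g d ph n) z.
Proof.
  intros Hg. apply ex_derive_DiffC. destruct (Fprod_derive g d ph n z Hg) as [l H].
  exists l. apply conv2. exact H.
Qed.

Fixpoint prodR (n : nat) (f : nat -> R) : R :=
  match n with O => 1 | S m => prodR m f * f m end.

Lemma prodR_ext n f g : (forall k, (k < n)%nat -> f k = g k) -> prodR n f = prodR n g.
Proof. induction n; intros H; simpl; auto. rewrite IHn, H; auto. Qed.

Lemma prodR_S_l n f : prodR (S n) f = f O * prodR n (fun k => f (S k)).
Proof. induction n; simpl. ring. simpl in IHn. rewrite IHn. ring. Qed.

Lemma prodR_shift n f : f n = f O -> prodR n (fun k => f (S k)) = prodR n f.
Proof. intros H. destruct n as [|m]. reflexivity.
  rewrite (prodR_S_l m f). simpl prodR at 1. rewrite H. ring. Qed.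

Lemma prodR_shiftq n (h : R -> R) t ph q :
  (forall x, h (x + INR n * ph) = h x) ->
  prodR n (fun k => h (t + INR (k + q) * ph)) = prodR n (fun k => h (t + INR k * ph)).
Proof.
  intros Hp. induction q as [|q IH].
  - apply prodR_ext. intros k _. rewrite Nat.add_0_r. reflexivity.
  - rewrite <- IH. rewrite <- (prodR_shift n (fun k => h (t + INR (k + q) * ph))).
    + apply prodR_ext. intros k _. f_equal. f_equal. f_equal. f_equal. lia.
    + cbv beta. replace (0 + q)%nat with q by lia. rewrite <- (Hp (t + INR q * ph)). f_equal. rewrite plus_INR. ring.
Qed.

Lemma prodR_nonneg n f : (forall k, (k < n)%nat -> 0 <= f k) -> 0 <= prodR n f.
Proof. induction n; intros H; simpl. lra. apply Rmult_le_pos. apply IHn; auto. apply H; lia. Qed.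

Lemma prodR_le n f g : (forall k, (k < n)%nat -> 0 <= f k <= g k) -> prodR n f <= prodR n g.
Proof. induction n; intros H; simpl. lra.
  assert (prodR n f <= prodR n g) by (apply IHn; auto).
  assert (0 <= prodR n f) by (apply prodR_nonneg; intros; apply H; lia).
  destruct (H n ltac:(lia)). apply Rmult_le_compat; auto. Qed.

Lemma prodR_mult n f g : prodR n (fun k => f k * g k) = prodR n f * prodR n g.
Proof. induction n; simpl prodR. ring. rewrite IHn. ring. Qed.

Lemma prodR_const n c : prodR n (fun _ => c) = c ^ n.
Proof. induction n; simpl prodR; simpl pow. ring. rewrite IHn. ring. Qed.

Lemma prodR_sq n f : prodR n (fun k => (f k)^2) = (prodR n f)^2.
Proof. induction n. simpl. ring. change (prodR (S n) (fun k => f k ^ 2)) with (prodR n (fun k => f k ^ 2) * f n ^ 2). rewrite IHn. simpl. ring. Qed.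

Lemma prodR_rev n f : prodR n (fun k => f (n - S k)%nat) = prodR n f.
Proof.
  induction n as [|m IH]. reflexivity.
  rewrite prodR_S_l. simpl prodR at 2.
  replace (f (S m - 1)%nat) with (f m) by (f_equal; lia).
  rewrite <- IH. 
  rewrite (prodR_ext m (fun k => f (S m - S (S k))%nat) (fun k => f (m - S k)%nat)) by (intros; f_equal; lia).
  ring.
Qed.

Lemma prodR_fact n x : prodR n (fun k => x / INR (S k)) = x ^ n / INR (fact n).
Proof. induction n. simpl. field.
  change (prodR (S n) (fun k => x / INR (S k))) with (prodR n (fun k => x / INR (S k)) * (x / INR (S n))).
  rewrite IHn. rewrite fact_simpl, mult_INR. simpl pow.
  assert (0 < INR (fact n)) by (apply lt_0_INR, lt_O_fact).
  assert (0 < INR (S n)) by (apply lt_0_INR; lia). field. lra. Qed.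

Lemma pow_fact_le_exp n : INR n ^ n / INR (fact n) <= exp (INR n).
Proof.
  assert (H := exp_ge_taylor (INR n) n (pos_INR n)).
  assert (Hs : forall m, INR n ^ m / INR (fact m) <= sum_f_R0 (fun k => INR n ^ k / INR (fact k)) m).
  { intros m. destruct m. simpl. lra. simpl. 
    assert (0 <= sum_f_R0 (fun k : nat => INR n ^ k / INR (fact k)) m).
    { apply cond_pos_sum. intros k. apply Rdiv_le_0_compat. apply pow_le, pos_INR. apply lt_0_INR, lt_O_fact. }
    lra. }
  specialize (Hs n). lra.
Qed.

Lemma PI_gt_3 : 3 < PI.
Proof. pose proof PI2_3_2. lra. Qed.

Lemma cos_ub_eq b : cos_ub b = 1 - b^2/2 + b^4/24 - b^6/720 + b^8/40320.
Proof. unfold cos_ub, cos_approx, cos_term. cbn [sum_f_R0].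
  replace (INR (fact (2*0))) with 1 by (rewrite INR_IZR_INZ; reflexivity).
  replace (INR (fact (2*1))) with 2 by (rewrite INR_IZR_INZ; reflexivity).
  replace (INR (fact (2*2))) with 24 by (rewrite INR_IZR_INZ; reflexivity).
  replace (INR (fact (2*3))) with 720 by (rewrite INR_IZR_INZ; reflexivity).
  replace (INR (fact (2*4))) with 40320 by (rewrite INR_IZR_INZ; reflexivity).
  replace (2*0)%nat with 0%nat by reflexivity. replace (2*1)%nat with 2%nat by reflexivity.
  replace (2*2)%nat with 4%nat by reflexivity. replace (2*3)%nat with 6%nat by reflexivity.
  replace (2*4)%nat with 8%nat by reflexivity.
  simpl pow. field.
Qed.

Lemma one_minus_cos_lb b : 0 <= b <= PI -> b ^ 2 / 16 <= 1 - cos b.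
Proof.
  intros Hb. pose proof PI_4. pose proof PI_gt_3.
  destruct (Rle_dec b (PI / 2)) as [h|h].
  - destruct (COS b) as [_ H1]; try lra. rewrite cos_ub_eq in H1.
    assert (y2 : b ^ 2 <= 4) by nra.
    assert (y0 : 0 <= b ^ 2) by nra.
    replace (b ^ 4) with (b^2 * b^2) in H1 by ring.
    replace (b ^ 6) with (b^2 * b^2 * b^2) in H1 by ring.
    replace (b ^ 8) with (b^2 * b^2 * b^2 * b^2) in H1 by ring.
    set (y := b ^ 2) in *.
    assert (0 <= y * y * y) by (apply Rmult_le_pos; nra).
    assert (y * y * y * y <= 4 * (y * y * y)) by (replace (y*y*y*y) with ((y*y*y)*y) by ring; replace (4*(y*y*y)) with ((y*y*y)*4) by ring; apply Rmult_le_compat_l; lra).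
    assert (y * y <= 4 * y) by nra.
    nra.
  - assert (cos b <= 0) by (apply cos_le_0; lra). nra.
Qed.

Lemma cos_gap (n k : nat) (s : R) :
  (1 <= k)%nat -> (k < n)%nat -> Rabs s <= PI / INR n ->
  1 / (2 * ((INR n / INR k) * (INR n / INR (n - k))) ^ 2) <= 1 - cos (s + INR k * (2 * PI / INR n)).
Proof.
  intros Hk Hkn Hs. rewrite minus_INR by lia.
  assert (K1 : 1 <= INR k) by (apply (le_INR 1); lia).
  assert (KN : INR k + 1 <= INR n) by (rewrite <- S_INR; apply le_INR; lia).
  set (N := INR n) in *. set (K := INR k) in *.
  pose proof PI_4. pose proof PI_gt_3.
  apply Rabs_le_between in Hs.
  set (al := s + K * (2 * PI / N)).
  set (u := PI * K * (N - K) / N ^ 2).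
  assert (Npos : 0 < N) by lra.
  assert (Eq : 1 / (2 * (N / K * (N / (N - K))) ^ 2) = (u / PI) ^ 2 / 2).
  { unfold u. field. repeat split; lra. }
  rewrite Eq.
  assert (u0 : 0 <= u). { unfold u. apply Rmult_le_pos. apply Rmult_le_pos; [apply Rmult_le_pos|]; lra.
     apply Rlt_le, Rinv_0_lt_compat. nra. }
  assert (al1 : (2 * K - 1) * PI / N <= al).
  { unfold al. replace ((2 * K - 1) * PI / N) with (- (PI / N) + K * (2 * PI / N)) by (field; lra). lra. }
  assert (al2 : al <= (2 * K + 1) * PI / N).
  { unfold al. replace ((2 * K + 1) * PI / N) with (PI / N + K * (2 * PI / N)) by (field; lra). lra. }
  assert (Hbound : exists be, 0 <= be <= PI /\ u <= be /\ cos al = cos be).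
  { destruct (Rle_dec al PI) as [h|h].
    - exists al. repeat split; auto.
      + assert (0 <= (2 * K - 1) * PI / N). { apply Rdiv_le_0_compat; nra. } lra.
      + assert (u <= (2 * K - 1) * PI / N).
        { unfold u. apply Rmult_le_reg_r with (N ^ 2). nra.
          replace (PI * K * (N - K) / N ^ 2 * N ^ 2) with (PI * K * (N - K)) by (field; lra).
          replace ((2 * K - 1) * PI / N * N ^ 2) with (PI * ((2 * K - 1) * N)) by (field; lra).
          assert (h1 : K * (N - K) <= (2 * K - 1) * N) by nra.
          replace (PI * K * (N - K)) with (PI * (K * (N - K))) by ring.
          apply Rmult_le_compat_l; lra. }
        lra.
    - exists (2 * PI - al). repeat split.
      + assert (al <= 2 * PI).
        { assert ((2 * K + 1) * PI / N <= 2 * PI).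
          { apply Rmult_le_reg_r with N; auto. replace ((2 * K + 1) * PI / N * N) with ((2 * K + 1) * PI) by (field; lra). nra. }
          lra. }
        lra.
      + lra.
      + assert (u <= 2 * PI - (2 * K + 1) * PI / N).
        { unfold u. apply Rmult_le_reg_r with (N ^ 2). nra.
          replace (PI * K * (N - K) / N ^ 2 * N ^ 2) with (PI * K * (N - K)) by (field; lra).
          replace ((2 * PI - (2 * K + 1) * PI / N) * N ^ 2) with (PI * ((2 * N - 2 * K - 1) * N)) by (field; lra).
          assert (h1 : K * (N - K) <= (2 * N - 2 * K - 1) * N) by nra.
          replace (PI * K * (N - K)) with (PI * (K * (N - K))) by ring.
          apply Rmult_le_compat_l; lra. }
        lra.
      + rewrite cos_minus, cos_2PI, sin_2PI. ring. }
  destruct Hbound as [be [Hbe [Hube Hcos]]].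
  rewrite Hcos. pose proof (one_minus_cos_lb be Hbe).
  assert ((u / PI) ^ 2 / 2 <= u ^ 2 / 16).
  { replace ((u / PI) ^ 2 / 2) with (u ^ 2 * / (2 * PI ^ 2)) by (field; lra).
    unfold Rdiv. apply Rmult_le_compat_l. nra.
    apply Rinv_le_contravar. lra. nra. }
  assert (u ^ 2 <= be ^ 2) by (apply pow_incr; lra).
  lra.
Qed.

Lemma mod_bound (d r al : R) : 0 < d -> d <= 1/4 -> 1/2 <= r -> r <= 1 - d ->
  Cmod (Pp (RtoC d) r al) <= 1 /\ d * (1 - d) * (1 - cos al) <= 1 - Cmod (Pp (RtoC d) r al).
Proof.
  intros H0 H1 H2 H3.
  set (w := Pp (RtoC d) r al).
  assert (Hw : Cmod w ^ 2 = d ^ 2 + 2 * d * r * cos al + r ^ 2).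
  { rewrite Cmod_sqr. unfold w, Pp, cis, RtoC. simpl. pose proof (sin2_cos2 al). unfold Rsqr in H. nra. }
  pose proof (COS_bound al) as Hc.
  assert (Key : 2 * d * (1 - d) * (1 - cos al) <= 1 - Cmod w ^ 2).
  { rewrite Hw.
    assert (0 <= ((1 - d) - r) * ((1 - d) + r + 2 * d * cos al)) by (apply Rmult_le_pos; nra).
    nra. }
  assert (0 <= 1 - cos al) by lra.
  assert (0 <= 2 * d * (1 - d) * (1 - cos al)) by (apply Rmult_le_pos; [nra|lra]).
  pose proof (Cmod_ge_0 w).
  assert (Cmod w <= 1) by nra.
  split; auto. nra.
Qed.

Lemma growth_use (g : C -> C) (lam M : R) :
  1 <= lam -> 1 <= M ->
  (forall gamma : R, 0 < gamma -> gamma <= 1 ->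
       forall z : C, Cmod z <= 1 - gamma -> Cmod (g z) <= lam * M / gamma) ->
  forall w m, 0 < m -> m <= 1 - Cmod w -> Cmod (g w) <= lam * M / m.
Proof.
  intros Hl HM Hg w m Hm Hmw. pose proof (Cmod_ge_0 w).
  eapply Rle_trans. apply (Hg (1 - Cmod w)); lra.
  unfold Rdiv. apply Rmult_le_compat_l. nra. apply Rinv_le_contravar; lra.
Qed.

Lemma cont_unpack (g : C -> C) z : continuous_on_closed_disk g -> closed_disk z ->
  forall eta, 0 < eta -> exists rho, 0 < rho /\ forall w, closed_disk w -> Cmod (w - z) < rho -> Cmod (g w - g z) < eta.
Proof.
  intros Hg Hz eta He. specialize (Hg z Hz).
  assert (he2 : 0 < eta / 2) by lra.
  assert (Hb : locally (g z) (fun y => @ball C_UniformSpace (g z) (eta / 2) y)).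
  { exists (mkposreal (eta / 2) he2). intros y Hy. exact Hy. }
  specialize (Hg _ Hb). destruct Hg as [eps Heps].
  exists eps. split. apply cond_pos. intros w Hw Hwz.
  assert (Hball : @ball C_UniformSpace z eps w).
  { split.
    - change (Rabs (fst w + - fst z) < eps). pose proof (fst_le_Cmod (w - z)%C). simpl in H. lra.
    - change (Rabs (snd w + - snd z) < eps). pose proof (snd_le_Cmod (w - z)%C). simpl in H. lra. }
  specialize (Heps w Hball Hw).
  destruct Heps as [e1 e2].
  change (Rabs (fst (g w) + - fst (g z)) < eta / 2) in e1.
  change (Rabs (snd (g w) + - snd (g z)) < eta / 2) in e2.
  pose proof (Cmod_2Rmax (g w - g z)%C).
  assert (Rmax (Rabs (fst (g w - g z)%C)) (Rabs (snd (g w - g z)%C)) < eta / 2).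
  { apply Rmax_lub_lt; simpl; lra. }
  assert (sqrt 2 < 2).
  { rewrite <- (sqrt_pow2 2) at 2 by lra. apply sqrt_lt_1; lra. }
  pose proof (Rmax_l (Rabs (fst (g w - g z)%C)) (Rabs (snd (g w - g z)%C))).
  pose proof (Rabs_pos (fst (g w - g z)%C)).
  assert (0 <= sqrt 2) by apply sqrt_pos.
  nra.
Qed.

Lemma Gamma_Pp d th : Gamma_pt d th = Pp (RtoC d) (1 - d) th.
Proof. unfold Gamma_pt, Pp, cis, RtoC. apply injective_projections; simpl; ring. Qed.

Lemma rot_Pp d th r t : rot d th (Pp (RtoC d) r t) = Pp (RtoC d) r (t + th).
Proof. unfold rot, Pp, cis, RtoC. rewrite cos_plus, sin_plus. apply injective_projections; simpl; ring. Qed.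

Lemma rot_center d th : rot d th (RtoC d) = RtoC d.
Proof. unfold rot. ring. Qed.

Lemma Fprod_circle g d ph n r t :
  Cmod (Fprod g d ph n (Pp (RtoC d) r t)) = prodR n (fun k => Cmod (g (Pp (RtoC d) r (t + INR k * ph)))).
Proof. induction n; simpl Fprod; simpl prodR.
  - unfold Cmod, RtoC; simpl. rewrite Rmult_0_l, Rplus_0_r, !Rmult_1_r. apply sqrt_1.
  - rewrite Cmod_mult, IHn, rot_Pp. reflexivity.
Qed.

Lemma Fprod_center g d ph n : Cmod (Fprod g d ph n (RtoC d)) = Cmod (g (RtoC d)) ^ n.
Proof. induction n; simpl Fprod; simpl pow.
  - unfold Cmod, RtoC; simpl. rewrite Rmult_0_l, Rplus_0_r, !Rmult_1_r. apply sqrt_1.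
  - rewrite Cmod_mult, IHn, rot_center. ring.
Qed.

Lemma choose_q (t ph : R) (n : nat) : 0 < ph -> 0 <= t <= INR n * ph ->
  exists q : nat, (q <= n)%nat /\ INR n * ph - ph / 2 <= t + INR q * ph <= INR n * ph + ph / 2.
Proof.
  intros Hph Ht.
  assert (H : forall m, INR n * ph - ph / 2 <= t + INR m * ph ->
    exists q : nat, (q <= m)%nat /\ INR n * ph - ph / 2 <= t + INR q * ph <= INR n * ph + ph / 2).
  { induction m as [|m IH]; intros Hm.
    - exists 0%nat. split. lia. simpl in *. lra.
    - destruct (Rle_dec (INR n * ph - ph / 2) (t + INR m * ph)) as [h|h].
      + destruct (IH h) as [q [Hq1 Hq2]]. exists q. split. lia. auto.
      + exists (S m). split. lia. rewrite S_INR in *. lra. }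
  apply H. lra.
Qed.

Lemma Pp_closed d th : 0 < d <= 1 -> closed_disk (Pp (RtoC d) (1 - d) th).
Proof. intros Hd. unfold closed_disk.
  replace (Pp (RtoC d) (1 - d) th) with (RtoC d + (Pp (RtoC d) (1 - d) th - RtoC d))%C by ring.
  eapply Rle_trans. apply Cmod_triangle. rewrite Pp_c, Cmod_R, !Rabs_pos_eq; lra. Qed.

Lemma unif_J (g : C -> C) d th0 eps : 0 < d <= 1/4 -> continuous_on_closed_disk g ->
  (forall th, Rabs th <= th0 -> Cmod (g (Pp (RtoC d) (1 - d) th)) < eps) ->
  forall eta, 0 < eta -> exists rho, 0 < rho /\ forall th, Rabs th <= th0 -> forall w, closed_disk w ->
    Cmod (w - Pp (RtoC d) (1 - d) th) < rho -> Cmod (g w) < eps + eta.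
Proof.
  intros Hd Hg HJ eta He.
  assert (Ex : forall th, exists p : posreal, forall w, closed_disk w ->
     Cmod (w - Pp (RtoC d) (1 - d) th) < p -> Cmod (g w - g (Pp (RtoC d) (1 - d) th)) < eta).
  { intros th. destruct (cont_unpack g (Pp (RtoC d) (1 - d) th) Hg (Pp_closed d th ltac:(lra)) eta He) as [r [Hr Hw]].
    exists (mkposreal r Hr). exact Hw. }
  set (rf := fun th => proj1_sig (constructive_indefinite_description _ (Ex th))).
  assert (Hrf : forall th w, closed_disk w -> Cmod (w - Pp (RtoC d) (1 - d) th) < rf th ->
      Cmod (g w - g (Pp (RtoC d) (1 - d) th)) < eta).
  { intros th. unfold rf. destruct (constructive_indefinite_description _ (Ex th)) as [p Hp]. simpl. exact Hp. }
  assert (Hpos : forall th, 0 < rf th / 3) by (intro th; pose proof (cond_pos (rf th)); lra).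
  destruct (compactness_value_1d (- th0) th0 (fun th => mkposreal (rf th / 3) (Hpos th))) as [d0 Hd0].
  exists d0. split. apply cond_pos.
  intros th Hth w Hw Hwth. apply NNPP. intro Hneg.
  apply (Hd0 th). { apply Rabs_le_between in Hth. lra. }
  intros [t [Ht [Hxt Hdt]]]. simpl in Hxt, Hdt. apply Hneg.
  assert (Hwt : Cmod (w - Pp (RtoC d) (1 - d) t) < rf t).
  { replace (w - Pp (RtoC d) (1 - d) t)%C with ((w - Pp (RtoC d) (1 - d) th) + (Pp (RtoC d) (1 - d) th - Pp (RtoC d) (1 - d) t))%C by ring.
    eapply Rle_lt_trans. apply Cmod_triangle.
    pose proof (Pp_t (RtoC d) (1 - d) th t). rewrite Rabs_pos_eq in H by lra.
    pose proof (Rabs_pos (th - t)).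
    assert ((1 - d) * (2 * Rabs (th - t)) <= 2 * Rabs (th - t)) by nra.
    lra. }
  specialize (Hrf t w Hw Hwt).
  assert (Cmod (g (Pp (RtoC d) (1 - d) t)) < eps) by (apply HJ; apply Rabs_le; lra).
  replace (g w) with ((g w - g (Pp (RtoC d) (1 - d) t)) + g (Pp (RtoC d) (1 - d) t))%C by ring.
  eapply Rle_lt_trans. apply Cmod_triangle. lra.
Qed.

Lemma pow_exp_ln y n : 0 < y -> y ^ n = exp (INR n * ln y).
Proof. intros Hy. induction n. simpl. rewrite Rmult_0_l, exp_0. reflexivity.
  rewrite S_INR, Rmult_plus_distr_r, exp_plus, Rmult_1_l, exp_ln by auto. simpl. rewrite IHn. ring. Qed.

Lemma numeric x a N (n' : nat) : 0 < x <= 1/4 -> 0 < a < PI -> INR n' = N - 1 -> 1 <= N -> N <= 2 * PI / a + 1 ->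
  exp ((18 * PI / a) * ln x) * (3 / x) ^ n' * (exp N) ^ 4 < 1.
Proof.
  intros Hx Ha Hn HN1 HN2.
  assert (L1 : 1 < ln 4).
  { rewrite <- ln_exp with 1. apply ln_increasing. apply exp_pos. pose proof exp_le_3. lra. }
  assert (Lx : ln x <= ln (1/4)) by (apply ln_le; lra).
  rewrite ln_div in Lx by lra. rewrite ln_1 in Lx.
  set (L := - ln x).
  assert (LL : ln 4 <= L) by (unfold L; lra).
  assert (L3 : ln 3 < L) by (assert (ln 3 < ln 4) by (apply ln_increasing; lra); lra).
  assert (L30 : 0 < ln 3) by (rewrite <- ln_1; apply ln_increasing; lra).
  rewrite (pow_exp_ln (3 / x)) by (apply Rdiv_lt_0_compat; lra).
  rewrite (pow_exp_ln (exp N)) by apply exp_pos.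
  rewrite ln_div, ln_exp by lra.
  rewrite <- !exp_plus. rewrite <- exp_0. apply exp_increasing.
  fold L. replace (ln x) with (- L) by (unfold L; ring).
  assert (e1 : INR n' * (ln 3 - - L) <= (N - 1) * (2 * L)).
  { rewrite Hn. apply Rmult_le_compat_l; lra. }
  assert (e2 : INR 4 * N <= 4 * N * L). { simpl. nra. }
  assert (e3 : N * a <= 2 * PI + a).
  { apply Rmult_le_reg_r with (/ a). apply Rinv_0_lt_compat; lra.
    replace (N * a * / a) with N by (field; lra).
    replace ((2 * PI + a) * / a) with (2 * PI / a + 1) by (field; lra). lra. }
  assert (e4 : 6 * N * L < 18 * PI / a * L).
  { apply Rmult_lt_compat_r. lra.
    apply Rmult_lt_reg_r with a. lra. replace (18 * PI / a * a) with (18 * PI) by (field; lra). nra. }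
  replace (18 * PI / a * - L) with (- (18 * PI / a * L)) by ring.
  replace (INR 4) with 4 by (simpl; ring). simpl in e2. assert ((N - 1) * (2 * L) <= 2 * N * L) by nra. lra.
Qed.

Lemma u_prod_bound (n' : nat) :
  let N := INR (S n') in
  prodR n' (fun j => N / INR (S j)) <= exp N /\ 0 <= prodR n' (fun j => N / INR (S j)).
Proof.
  intros N. rewrite prodR_fact.
  assert (Np : 0 < N) by (unfold N; apply lt_0_INR; lia).
  assert (Fp : 0 < INR (fact n')) by (apply lt_0_INR, lt_O_fact).
  split.
  - assert (E : N ^ n' / INR (fact n') = N ^ (S n') / INR (fact (S n'))).
    { rewrite fact_simpl, mult_INR. fold N. simpl pow. field. lra. }
    rewrite E. unfold N. apply pow_fact_le_exp.
  - apply Rdiv_le_0_compat. apply pow_le; lra. lra.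
Qed.

Lemma v_prod_eq (n' : nat) :
  let N := INR (S n') in
  prodR n' (fun j => N / INR (S n' - S j)) = prodR n' (fun j => N / INR (S j)).
Proof.
  intros N. rewrite <- (prodR_rev n' (fun j => N / INR (S j))).
  apply prodR_ext. intros k Hk. f_equal. f_equal. lia.
Qed.

Lemma circle_bound (g : C -> C) d lam M (n' : nat) r eps eta rho :
  0 < d -> d <= 1/4 -> 1 <= lam -> 1 <= M ->
  (forall gamma : R, 0 < gamma -> gamma <= 1 ->
       forall z : C, Cmod z <= 1 - gamma -> Cmod (g z) <= lam * M / gamma) ->
  1/2 <= r -> r <= 1 - d -> (1 - d) - r < rho ->
  (forall th, Rabs th <= PI / INR (S n') -> forall w, closed_disk w ->
      Cmod (w - Pp (RtoC d) (1 - d) th) < rho -> Cmod (g w) < eps + eta) ->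
  forall s, Rabs s <= PI / INR (S n') ->
  prodR (S n') (fun k => Cmod (g (Pp (RtoC d) r (s + INR k * (2 * PI / INR (S n')))))) <=
    (eps + eta) * ((3 * lam * M / d) ^ n' * (exp (INR (S n'))) ^ 4).
Proof.
  intros Hd0 Hd1 Hl HM Hgrow Hr1 Hr2 Hrho HU s Hs.
  set (N := INR (S n')) in *. set (ph := 2 * PI / N).
  assert (Np : 0 < N) by (unfold N; apply lt_0_INR; lia).
  set (C0 := 3 * lam * M / d).
  assert (C0p : 0 < C0) by (unfold C0; apply Rdiv_lt_0_compat; nra).
  rewrite prodR_S_l.
  assert (F0 : Cmod (g (Pp (RtoC d) r (s + INR 0 * ph))) < eps + eta).
  { replace (s + INR 0 * ph) with s by (simpl; ring).
    destruct (mod_bound d r s Hd0 Hd1 Hr1 Hr2) as [Hc _].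
    apply (HU s Hs). exact Hc.
    replace (Pp (RtoC d) r s - Pp (RtoC d) (1 - d) s)%C with (Pp (RtoC d) r s - Pp (RtoC d) (1 - d) s)%C by reflexivity.
    rewrite Pp_r. rewrite Rabs_left1 by lra. lra. }
  set (b := fun j : nat => C0 * ((N / INR (S j)) * (N / INR (S n' - S j))) ^ 2).
  assert (Fk : forall j, (j < n')%nat -> 0 <= Cmod (g (Pp (RtoC d) r (s + INR (S j) * ph))) <= b j).
  { intros j Hj. split. apply Cmod_ge_0.
    set (al := s + INR (S j) * ph).
    set (Q := (N / INR (S j)) * (N / INR (S n' - S j))).
    assert (Qp : 0 < Q).
    { unfold Q. apply Rmult_lt_0_compat; apply Rdiv_lt_0_compat; auto; apply lt_0_INR; lia. }
    pose proof (cos_gap (S n') (S j) s ltac:(lia) ltac:(lia) Hs) as Hcg. fold N ph al Q in Hcg.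
    destruct (mod_bound d r al Hd0 Hd1 Hr1 Hr2) as [_ Hm].
    set (m := d * (1 - d) * (1 / (2 * Q ^ 2))).
    assert (mp : 0 < m). { unfold m. apply Rmult_lt_0_compat. nra. apply Rdiv_lt_0_compat. lra. nra. }
    assert (mle : m <= 1 - Cmod (Pp (RtoC d) r al)).
    { eapply Rle_trans; [|exact Hm]. unfold m. apply Rmult_le_compat_l; auto. nra. }
    eapply Rle_trans. apply (growth_use g lam M Hl HM Hgrow _ m mp mle).
    unfold b, m. fold Q. unfold C0.
    replace (lam * M / (d * (1 - d) * (1 / (2 * Q ^ 2)))) with ((lam * M / d) * Q ^ 2 * (2 / (1 - d))) by (field; repeat split; nra).
    replace (3 * lam * M / d * Q ^ 2) with ((lam * M / d) * Q ^ 2 * 3) by (field; lra).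
    apply Rmult_le_compat_l. apply Rmult_le_pos. apply Rlt_le, Rdiv_lt_0_compat; nra. nra.
    apply Rmult_le_reg_r with (1 - d). lra. unfold Rdiv. rewrite Rmult_assoc, Rinv_l by lra. lra. }
  assert (PB : prodR n' (fun j => Cmod (g (Pp (RtoC d) r (s + INR (S j) * ph)))) <= prodR n' b).
  { apply prodR_le. auto. }
  assert (Pb : prodR n' b <= C0 ^ n' * exp N ^ 4).
  { unfold b. rewrite prodR_mult, prodR_const, prodR_sq, prodR_mult.
    pose proof (u_prod_bound n') as [U1 U2]. fold N in U1, U2.
    pose proof (v_prod_eq n') as V. fold N in V. rewrite V.
    apply Rmult_le_compat_l. apply pow_le; lra.
    set (A := prodR n' (fun j => N / INR (S j))) in *.
    replace ((A * A) ^ 2) with ((A ^ 2) ^ 2) by ring.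
    replace (exp N ^ 4) with ((exp N ^ 2) ^ 2) by ring.
    apply pow_incr. split. nra. apply pow_incr. lra. }
  assert (P0 : 0 <= prodR n' (fun j => Cmod (g (Pp (RtoC d) r (s + INR (S j) * ph))))).
  { apply prodR_nonneg. intros. apply Cmod_ge_0. }
  pose proof (Cmod_ge_0 (g (Pp (RtoC d) r (s + INR 0 * ph)))).
  apply Rmult_le_compat; try lra.
Qed.

Theorem theorem5p5 :
  exists Cst : R, 0 < Cst /\
  forall (delta a lambda M : R) (g : C -> C),
    0 < delta -> delta <= 1 / 4 ->
    0 < a -> a < PI ->
    1 <= lambda -> 1 <= M ->
    continuous_on_closed_disk g ->
    analytic_on_open_disk g ->
    1 <= Cmod (g (RtoC delta)) ->
    (forall gamma : R, 0 < gamma -> gamma <= 1 ->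
       forall z : C, Cmod z <= 1 - gamma -> Cmod (g z) <= lambda * M / gamma) ->
    exists z : C, in_arc_J delta a z /\
      Rpower (delta / (lambda * M)) (Cst / a) <= Cmod (g z).
Proof.
  exists (18 * PI). split. { pose proof PI_RGT_0. lra. }
  intros d a lam M g Hd0 Hd1 Ha0 Ha1 Hl HM Hcont Han Hgd Hgrow.
  apply NNPP. intro Hneg.
  set (x := d / (lam * M)).
  assert (xp : 0 < x <= 1/4).
  { unfold x. split. apply Rdiv_lt_0_compat; nra.
    apply Rmult_le_reg_r with (lam * M). nra. unfold Rdiv. rewrite Rmult_assoc, Rinv_l by nra. nra. }
  set (eps := Rpower x (18 * PI / a)).
  set (th0 := a / (2 * (1 - d))).
  assert (HJ : forall th, Rabs th <= th0 -> Cmod (g (Pp (RtoC d) (1 - d) th)) < eps).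
  { intros th Hth. apply Rnot_le_lt. intro Hle. apply Hneg.
    exists (Gamma_pt d th). split.
    - exists th. split; auto.
    - rewrite Gamma_Pp. exact Hle. }
  destruct (archimed (2 * PI / a)) as [Hz1 Hz2].
  set (z0 := up (2 * PI / a)) in *.
  assert (Hpa : 2 < 2 * PI / a).
  { apply Rmult_lt_reg_r with a. lra. replace (2 * PI / a * a) with (2 * PI) by (field; lra). nra. }
  assert (z0pos : (0 <= z0)%Z) by (apply le_IZR; lra).
  set (n := Z.to_nat z0).
  assert (En : INR n = IZR z0) by (unfold n; rewrite INR_IZR_INZ, Z2Nat.id; auto).
  assert (n3 : (3 <= n)%nat).
  { apply INR_le. rewrite En. simpl. 
    assert (IZR 2 < IZR z0) by (simpl; lra). apply lt_IZR in H.
    assert (3 <= z0)%Z by lia. apply IZR_le in H0. simpl in H0. lra. }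
  destruct n as [|n'] eqn:En'. lia.
  set (N := INR (S n')) in *.
  assert (HN1 : 2 * PI / a < N) by (rewrite En; lra).
  assert (HN2 : N <= 2 * PI / a + 1) by (rewrite En; lra).
  assert (Np : 0 < N) by lra.
  set (ph := 2 * PI / N).
  assert (php : 0 < ph) by (unfold ph; apply Rdiv_lt_0_compat; [pose proof PI_RGT_0|]; lra).
  assert (Hth0 : PI / N <= th0).
  { unfold th0. apply Rle_trans with (a / 2).
    - apply Rmult_le_reg_r with N. auto. replace (PI / N * N) with PI by (field; lra).
      assert (2 * PI < N * a).
      { apply Rmult_lt_reg_r with (/ a). apply Rinv_0_lt_compat; lra.
        replace (N * a * / a) with N by (field; lra). exact HN1. }
      lra.
    - apply Rmult_le_reg_r with (2 * (1 - d) * 2). lra.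
      replace (a / 2 * (2 * (1 - d) * 2)) with (2 * a * (1 - d)) by (field; lra).
      replace (a / (2 * (1 - d)) * (2 * (1 - d) * 2)) with (2 * a) by (field; lra). nra. }
  set (C0 := 3 * lam * M / d).
  set (Pb := C0 ^ n' * exp N ^ 4).
  assert (Pbp : 0 < Pb).
  { unfold Pb. apply Rmult_lt_0_compat. apply pow_lt. unfold C0. apply Rdiv_lt_0_compat; nra.
    apply pow_lt, exp_pos. }
  assert (Hnum : eps * Pb < 1).
  { unfold eps, Pb, Rpower.
    replace C0 with (3 / x) by (unfold C0, x; field; split; nra).
    rewrite <- Rmult_assoc. apply (numeric x a N n' xp ltac:(lra)).
    - unfold N. rewrite S_INR. ring.
    - lra.
    - lra. }
  set (eta := (1 - eps * Pb) / (2 * Pb)).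
  assert (etap : 0 < eta) by (unfold eta; apply Rdiv_lt_0_compat; lra).
  destruct (unif_J g d th0 eps ltac:(lra) Hcont HJ eta etap) as [rho [rhop Hrho]].
  set (r := (1 - d) - Rmin (rho / 2) (1 / 4)).
  assert (rm1 : 0 < Rmin (rho / 2) (1 / 4)) by (apply Rmin_pos; lra).
  assert (rm2 : Rmin (rho / 2) (1 / 4) <= rho / 2) by apply Rmin_l.
  assert (rm3 : Rmin (rho / 2) (1 / 4) <= 1 / 4) by apply Rmin_r.
  assert (Hr1 : 1 / 2 <= r) by (unfold r; lra).
  assert (Hr2 : r < 1 - d) by (unfold r; lra).
  assert (Hr3 : (1 - d) - r < rho) by (unfold r; lra).
  assert (HB : Cmod (Fprod g d ph (S n') (RtoC d)) <= (eps + eta) * Pb).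
  { apply (mv_bound _ (RtoC d) (1 - d) r); try lra.
    - intros w Hw. apply Fprod_DiffC. intros k. apply Han.
      unfold rot. eapply Rle_lt_trans. apply Cmod_triangle. rewrite Cmod_mult, Cmod_cis, Cmod_R, Rabs_pos_eq by lra. lra.
    - intros t Ht. rewrite Fprod_circle.
      destruct (choose_q t ph (S n') php) as [q [Hq1 Hq2]].
      { fold N. unfold ph. replace (N * (2 * PI / N)) with (2 * PI) by (field; lra). lra. }
      assert (E2 : INR (S n') * ph = 2 * PI) by (fold N; unfold ph; field; lra).
      set (G := fun y => Cmod (g (Pp (RtoC d) r y))).
      assert (Gper : forall y, G (y + 2 * PI) = G y).
      { intro y. unfold G, Pp, cis. rewrite cos_plus, sin_plus, cos_2PI, sin_2PI. f_equal. f_equal.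
        f_equal. f_equal. apply injective_projections; simpl; ring. }
      change (prodR (S n') (fun k => G (t + INR k * ph)) <= (eps + eta) * Pb).
      rewrite <- (prodR_shiftq (S n') G t ph q).
      2: { intro y. rewrite E2. apply Gper. }
      set (s := t + INR q * ph - 2 * PI).
      rewrite (prodR_ext _ _ (fun k => G (s + INR k * ph))).
      2: { intros k _. rewrite <- (Gper (s + INR k * ph)). f_equal. unfold s. rewrite plus_INR. ring. }
      assert (Hs : Rabs s <= PI / N).
      { apply Rabs_le. rewrite E2 in Hq2. replace (PI / N) with (ph / 2) by (unfold ph; field; lra).
        unfold s. lra. }
      unfold G, Pb, C0, ph, N.
      apply (circle_bound g d lam M n' r eps eta rho Hd0 Hd1 Hl HM Hgrow Hr1 ltac:(lra) Hr3).
      + intros th Hth w Hw Hw2. apply (Hrho th). unfold N in Hth0. lra. auto. auto.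
      + exact Hs. }
  rewrite Fprod_center in HB.
  assert (1 <= Cmod (g (RtoC d)) ^ S n') by (apply pow_R1_Rle; lra).
  assert ((eps + eta) * Pb < 1).
  { unfold eta. replace ((eps + (1 - eps * Pb) / (2 * Pb)) * Pb) with (eps * Pb + (1 - eps * Pb) / 2) by (field; lra).
    lra. }
  lra.
Qed.
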